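(* Let $P$ be a finite poset and $\mathcal{J}\subseteq\mathrm{Hom}(P,\mathbb{N})$ a poset ideal. The set of minimal markers for $\mathcal{J}$ is finite.
   Context: $\mathbb{N}=\{0,1,2,\dots\}$; $\mathrm{Hom}(P,\mathbb{N})$ is the set of isotone maps $P\to\mathbb{N}$ ordered pointwise; a poset ideal is a down-closed subset. A marker for $\mathcal{J}$ is a pair of a poset ideal $I\subseteq P$ and an isotone map $\alpha:I\to\mathbb{N}$ such that every isotone $\phi:P\to\mathbb{N}$ with $\phi|_I=\alpha$ belongs to $\mathcal{J}$. It is a minimal marker if for no poset ideal $I'\subsetneq I$ is the restriction $\alpha|_{I'}$ a marker for $\mathcal{J}$. *)

(* Defs.v *)
From mathcomp Require Import all_boot all_order.
Set Implicit Arguments. Unset Strict Implicit. Unset Printing Implicit Defensive.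
Import Order.TTheory.

Section Markers.
Variables (d : Order.disp_t) (P : finPOrderType d).

Definition isotone (f : P -> nat) : Prop :=
  forall x y : P, (x <= y)%O -> f x <= f y.

Definition down_closed (I : {set P}) : Prop :=
  forall x y : P, (x <= y)%O -> y \in I -> x \in I.

Definition hom_ideal (J : (P -> nat) -> Prop) : Prop :=
  (forall phi, J phi -> isotone phi) /\
  (forall phi psi, J phi -> isotone psi -> (forall x, psi x <= phi x) -> J psi).

(* an isotone map alpha : I -> N, represented by a total function a : P -> nat
   of which only the values on I matter *)
Definition isotone_on (I : {set P}) (a : P -> nat) : Prop :=
  forall x y : P, x \in I -> y \in I -> (x <= y)%O -> a x <= a y.

Definition marker (J : (P -> nat) -> Prop) (I : {set P}) (a : P -> nat) : Prop :=
  down_closed I /\ isotone_on I a /\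
  forall phi, isotone phi -> (forall x, x \in I -> phi x = a x) -> J phi.

Definition minimal_marker (J : (P -> nat) -> Prop) (I : {set P}) (a : P -> nat) : Prop :=
  marker J I a /\
  forall I' : {set P}, down_closed I' -> I' \proper I -> ~ marker J I' a.

End Markers.

(* Main.v *)
Require Import Defs.
From mathcomp Require Import all_boot all_order.
From Stdlib Require Import Classical.
Import Order.TTheory.

Lemma list_max (A : eqType) (Q : A -> nat -> Prop) (s : seq A) :
  (forall a v v', v <= v' -> Q a v -> Q a v') -> (forall a, exists v, Q a v) ->
  exists V, forall a, a \in s -> Q a V.
Proof.
move=> mono ex; elim: s => [|a s [V HV]]; first by exists 0.
have [v Hv] := ex a; exists (maxn v V) => b; rewrite inE; case/orP => [/eqP->|bs].
  by apply: mono Hv; exact: leq_maxl.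
by apply: mono (HV b bs); exact: leq_maxr.
Qed.

Section Dickson.
Variable T : finType.
Definition trunc M (f : T -> nat) y := minn (f y) M.
Definition upd (g : T -> nat) x v y := if y == x then v else g y.
Definition upcl (s : seq T) (U : (T -> nat) -> Prop) :=
  forall f g, (forall y, y \in s -> f y <= g y) -> U f -> U g.

Lemma dickson s : forall U, upcl s U -> exists M, forall f, U f -> U (trunc M f).
Proof.
elim: s => [|x s IH] U hU.
  by exists 0 => f Uf; apply: hU Uf => y; rewrite in_nil.
pose Uv v g := U (upd g x v).
have hUv v : upcl s (Uv v).
  move=> f g le Uf; apply: hU Uf => y; rewrite inE /upd; case: (y == x) => //= ys.
  exact: le.
have monoUv v v' : v <= v' -> forall g, Uv v g -> Uv v' g.
  move=> lev g H; apply: hU H => y _; rewrite /upd; by case: (y == x).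
pose W g := exists v, Uv v g.
have hW : upcl s W by move=> f g le [v Hv]; exists v; exact: hUv le Hv.
have [MW HMW] := IH W hW.
have [V HV] : exists V, forall h : {ffun T -> 'I_MW.+1},
    W (fun y => val (h y)) -> Uv V (fun y => val (h y)).
  have [V HV] : exists V, forall h, h \in enum {ffun T -> 'I_MW.+1} ->
     (fun h v => W (fun y => val (h y)) -> Uv v (fun y => val (h y))) h V.
    apply: list_max.
  - by move=> a v v' le H1 H2; apply: monoUv le _ (H1 H2).
  - move=> h; case: (classic (W (fun y => val (h y)))) => [[v Hv]|nW].
      by exists v.
    by exists 0 => /nW.
  by exists V => h; apply: HV; rewrite mem_enum.
have WV : forall g, W g -> Uv V g.
  move=> g Wg.
  pose h := [ffun y => inord (minn (g y) MW) : 'I_MW.+1].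
  have Wh : W (fun y => val (h y)).
    apply: hW (HMW g Wg) => y _; rewrite ffunE /= inordK ?ltnS ?geq_minr //.
  apply: (hUv V _ _ _ (HV h Wh)) => y _; rewrite ffunE /= inordK.
    exact: geq_minl.
  by rewrite ltnS geq_minr.
have [Mall HMall] : exists M, forall v, v <= V -> forall g, Uv v g -> Uv v (trunc M g).
  have [M HM] : exists M, forall v, v \in iota 0 V.+1 ->
     (fun v M => forall g, Uv v g -> Uv v (trunc M g)) v M.
    apply: list_max.
  - move=> v M M' le /= H g0 Ug; apply: hUv (H g0 Ug) => y _; rewrite /trunc.
    by rewrite leq_min geq_minl (leq_trans (geq_minr _ _) le).
  - by move=> v; exact: IH (Uv v) (hUv v).
  by exists M => v hv; apply: HM; rewrite mem_iota /= add0n ltnS.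
exists (maxn V Mall) => f Uf.
have Uff : Uv (f x) f by apply: hU Uf => y _; rewrite /upd; case: eqP => [->|].
case: (leqP (f x) V) => hv.
  have H := HMall _ hv _ Uff; apply: hU H => y _; rewrite /upd /trunc.
  case: eqP => [->|_].
    by rewrite leq_min leqnn /= (leq_trans hv) // leq_maxl.
  by rewrite leq_min geq_minl (leq_trans (geq_minr _ _)) // leq_maxr.
have WVf : Uv V f by apply: WV; exists (f x).
have H := HMall V (leqnn V) _ WVf; apply: hU H => y _; rewrite /upd /trunc.
case: eqP => [->|_].
  by rewrite leq_min (ltnW hv) leq_maxl.
by rewrite leq_min geq_minl (leq_trans (geq_minr _ _)) // leq_maxr.
Qed.
End Dickson.

Theorem proposition1p8 (d : Order.disp_t) (P : finPOrderType d)
  (J : (P -> nat) -> Prop) :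
  hom_ideal J ->
  exists (n : nat) (f : 'I_n -> {set P} * (P -> nat)),
    forall (I : {set P}) (a : P -> nat), minimal_marker J I a ->
      exists i : 'I_n, (f i).1 = I /\ (forall x, x \in I -> (f i).2 x = a x).
Proof.
move=> [Jiso Jdown].
pose U (f : P -> nat) := exists phi, isotone phi /\ ~ J phi /\ forall y, phi y <= f y.
have hU : @upcl P (enum P) U.
  move=> f g le [phi [iphi [nJ lephi]]]; exists phi; split=> //; split=> // y.
  by apply: leq_trans (lephi y) (le y _); rewrite mem_enum.
have [M HM] := @dickson P _ _ hU.
have bound : forall I a, minimal_marker J I a -> forall x, x \in I -> a x <= M.
  move=> I a [[dI [iI mI]] minI] x xI; rewrite leqNgt; apply/negP => ltMa.
  pose I' := I :\: [set y | (x <= y)%O].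
  have dI' : down_closed I'.
    move=> y z yz; rewrite !inE => /andP[xz zI]; rewrite (dI _ _ yz zI) andbT.
    by apply/negP => xy; move/negP: xz; apply; apply: le_trans yz.
  have pI' : I' \proper I.
    apply/properP; split; first by apply/subsetP => y; rewrite inE => /andP[].
    by exists x => //; rewrite !inE lexx.
  have nm := minI I' dI' pI'.
  have [phi Hphi] : exists phi, ~ (isotone phi -> (forall y, y \in I' -> phi y = a y) -> J phi).
    apply: NNPP => H; apply: nm; split=> //; split.
      by move=> y z; rewrite !inE => /andP[_ yI] /andP[_ zI]; apply: iI.
    move=> phi; apply: NNPP => H2; apply: H; by exists phi.
  have [iphi [agr nJ]] : isotone phi /\ (forall y, y \in I' -> phi y = a y) /\ ~ J phi.
    by apply: NNPP => H; apply: Hphi => ip ag; apply: NNPP => nj; apply: H.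
  have [phi0 [iphi0 [nJ0 le0]]] : U (trunc P M phi) by apply: HM; exists phi.
  pose K := \max_(y in I) a y.
  pose psi y := if y \in I then a y else maxn (phi y) K.
  have ipsi : isotone psi.
    move=> y z yz; rewrite /psi; case: ifP => yI; case: ifP => zI.
    - exact: iI.
    - by apply: leq_trans (leq_maxr _ _); apply: (leq_bigmax_cond (F:=a)).
    - by rewrite (dI _ _ yz zI) in yI.
    - by rewrite geq_max !leq_max (iphi _ _ yz) leqnn orbT.
  have Jpsi : J psi by apply: mI => // y yI; rewrite /psi yI.
  apply: nJ0; apply: Jdown Jpsi iphi0 _ => y.
  apply: leq_trans (le0 y) _; rewrite /psi /trunc.
  case: ifP => yI.
    case: (boolP (x <= y)%O) => xy.
      by apply: leq_trans (geq_minr _ _) _; apply: ltnW; apply: leq_trans ltMa (iI _ _ xI yI xy).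
    by rewrite -agr ?geq_minl // !inE xy yI.
  by apply: leq_trans (geq_minl _ _) (leq_maxl _ _).
pose F := ({set P} * {ffun P -> 'I_M.+1})%type.
exists #|{: F}|, (fun i => let p : F := enum_val i in (p.1, fun y => val (p.2 y))).
move=> I a mm.
exists (enum_rank ((I, [ffun y => inord (a y)]) : F)); rewrite enum_rankK /=; split=> //.
by move=> x xI; rewrite ffunE inordK // ltnS (bound _ _ mm).
Qed.
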